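(* Let $m\in\mathbb Z$. For all $N\ge1$ and all $z=x+iy$ with $-\pi/10\le x\le2\pi$ and $y=8\pi/5$, $$\frac{e^{z/N}}{2\pi i\,(e^{z/N}-1)^{m+1}(e^{z/N})_N}=O(N^{m+1}),$$ with implied constant depending only on $m$.
   Context: $(q)_N:=(1-q)(1-q^2)\cdots(1-q^N)$. *)

(* Defs.v *)
From Stdlib Require Import Reals ZArith.
Open Scope R_scope.

Definition C : Type := (R * R)%type.
Definition RtoC (a : R) : C := (a, 0).
Definition Ci : C := (0, 1).
Definition Cadd (z w : C) : C := (fst z + fst w, snd z + snd w).
Definition Csub (z w : C) : C := (fst z - fst w, snd z - snd w).
Definition Cmul (z w : C) : C :=
  (fst z * fst w - snd z * snd w, fst z * snd w + snd z * fst w).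
Definition Cnorm2 (z : C) : R := fst z * fst z + snd z * snd z.
(* inverse; (0,0) maps to (0,0) as Rinv 0 is unspecified-but-total *)
Definition Cinv (z : C) : C := (fst z / Cnorm2 z, - snd z / Cnorm2 z).
Definition Cdiv (z w : C) : C := Cmul z (Cinv w).
Definition Cnorm (z : C) : R := sqrt (Cnorm2 z).
Definition Cexp (z : C) : C := (exp (fst z) * cos (snd z), exp (fst z) * sin (snd z)).
Fixpoint Cpow (z : C) (n : nat) : C :=
  match n with O => RtoC 1 | S n => Cmul z (Cpow z n) end.
Definition CpowZ (z : C) (k : Z) : C :=
  match k with
  | Z0 => RtoC 1
  | Zpos p => Cpow z (Pos.to_nat p)
  | Zneg p => Cinv (Cpow z (Pos.to_nat p))
  end.
Fixpoint qpoch (q : C) (N : nat) : C :=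
  match N with
  | O => RtoC 1
  | S n => Cmul (qpoch q n) (Csub (RtoC 1) (Cpow q (S n)))
  end.

Definition corF (m : Z) (N : nat) (z : C) : C :=
  let q := Cexp (Cdiv z (RtoC (INR N))) in
  Cdiv q (Cmul (Cmul (Cmul (RtoC (2 * PI)) Ci) (CpowZ (Csub q (RtoC 1)) (m + 1)))
               (qpoch q N)).

(* Main.v *)
Require Import Defs.
From Stdlib Require Import Reals ZArith Lra Lia Psatz.
Open Scope R_scope.

Definition E (a b : R) : Defs.C := (exp a * cos b, exp a * sin b).
Definition gfun (a b : R) : R := 1 - 2 * exp a * cos b + exp a * exp a.

Lemma Cnorm2_mul z w : Cnorm2 (Cmul z w) = Cnorm2 z * Cnorm2 w.
Proof. destruct z, w; unfold Cnorm2, Cmul; simpl; ring. Qed.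

Lemma Cnorm2_nonneg z : 0 <= Cnorm2 z.
Proof. destruct z; unfold Cnorm2; simpl; nra. Qed.

Lemma Cnorm2_inv z : Cnorm2 z <> 0 -> Cnorm2 (Cinv z) = / Cnorm2 z.
Proof. destruct z as [a b]; unfold Cinv, Cnorm2; simpl; intros H; field; exact H. Qed.

Lemma Cnorm2_pow w n : Cnorm2 (Cpow w n) = Cnorm2 w ^ n.
Proof.
  induction n; simpl.
  - unfold Cnorm2, RtoC; simpl; ring.
  - rewrite Cnorm2_mul, IHn; ring.
Qed.

Lemma Cdiv_real x y n : n <> 0 -> Cdiv (x, y) (RtoC n) = (x / n, y / n).
Proof.
  intros H; unfold Cdiv, Cmul, Cinv, Cnorm2, RtoC; simpl.
  f_equal; field; exact H.
Qed.

Lemma E_mul a b c d : Cmul (E a b) (E c d) = E (a + c) (b + d).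
Proof.
  unfold Cmul, E; simpl; rewrite exp_plus, cos_plus, sin_plus; f_equal; ring.
Qed.

Lemma Cpow_E a b k : Cpow (E a b) k = E (INR k * a) (INR k * b).
Proof.
  induction k.
  - simpl. unfold E, RtoC. rewrite !Rmult_0_l, exp_0, cos_0, sin_0. f_equal; ring.
  - simpl Cpow. rewrite IHk, E_mul, S_INR. f_equal; ring.
Qed.

Lemma sc a : sin a * sin a + cos a * cos a = 1.
Proof. pose proof (sin2_cos2 a) as H; unfold Rsqr in H; lra. Qed.

Lemma norm_1_minus_E a b : Cnorm2 (Csub (RtoC 1) (E a b)) = gfun a b.
Proof.
  unfold Cnorm2, Csub, RtoC, E, gfun; simpl.
  replace ((1 - exp a * cos b) * (1 - exp a * cos b) + (0 - exp a * sin b) * (0 - exp a * sin b))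
    with (1 - 2 * exp a * cos b + exp a * exp a * (sin b * sin b + cos b * cos b)) by ring.
  rewrite sc; ring.
Qed.

Lemma norm_E_minus_1 a b : Cnorm2 (Csub (E a b) (RtoC 1)) = gfun a b.
Proof.
  rewrite <- norm_1_minus_E. unfold Cnorm2, Csub, RtoC; simpl; ring.
Qed.

Lemma norm_E a b : Cnorm2 (E a b) = exp a * exp a.
Proof.
  unfold Cnorm2, E; simpl.
  replace (exp a * cos b * (exp a * cos b) + exp a * sin b * (exp a * sin b))
    with (exp a * exp a * (sin b * sin b + cos b * cos b)) by ring.
  rewrite sc; ring.
Qed.

Fixpoint prodR (f : nat -> R) (n : nat) : R :=
  match n with O => 1 | S n' => prodR f n' * f (S n') end.

Lemma norm_qpoch a b N :
  Cnorm2 (qpoch (E a b) N) = prodR (fun k => gfun (INR k * a) (INR k * b)) N.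
Proof.
  induction N; cbn [qpoch prodR].
  - unfold Cnorm2, RtoC; simpl; ring.
  - rewrite Cnorm2_mul, IHN, Cpow_E, norm_1_minus_E. reflexivity.
Qed.

Lemma gfun_alt a b : gfun a b = (exp a - cos b) * (exp a - cos b) + sin b * sin b.
Proof.
  unfold gfun.
  replace ((exp a - cos b) * (exp a - cos b) + sin b * sin b)
    with (exp a * exp a - 2 * exp a * cos b + (sin b * sin b + cos b * cos b)) by ring.
  rewrite sc; ring.
Qed.

Lemma gfun_nonneg a b : 0 <= gfun a b.
Proof.
  rewrite gfun_alt.
  pose proof (Rle_0_sqr (exp a - cos b)); pose proof (Rle_0_sqr (sin b)).
  unfold Rsqr in *; lra.
Qed.

Lemma INR_fact_S n : INR (Factorial.fact (S n)) = INR (S n) * INR (Factorial.fact n).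
Proof. rewrite fact_simpl, mult_INR. reflexivity. Qed.

Lemma cos_approx4 a : cos_approx a 4 = 1 - a^2/2 + a^4/24 - a^6/720 + a^8/40320.
Proof.
  unfold cos_approx, cos_term. cbn [sum_f_R0]. simpl Nat.mul.
  repeat rewrite INR_fact_S. simpl INR. field.
Qed.

Lemma cos_approx5 a : cos_approx a 5 = 1 - a^2/2 + a^4/24 - a^6/720 + a^8/40320 - a^10/3628800.
Proof.
  unfold cos_approx, cos_term. cbn [sum_f_R0]. simpl Nat.mul.
  repeat rewrite INR_fact_S. simpl INR. field.
Qed.

Lemma cos_approx3 a : cos_approx a 3 = 1 - a^2/2 + a^4/24 - a^6/720.
Proof.
  unfold cos_approx, cos_term. cbn [sum_f_R0]. simpl Nat.mul.
  repeat rewrite INR_fact_S. simpl INR. field.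
Qed.

Lemma cos_approx1 a : cos_approx a 1 = 1 - a^2/2.
Proof.
  unfold cos_approx, cos_term. cbn [sum_f_R0]. simpl Nat.mul.
  repeat rewrite INR_fact_S. simpl INR. field.
Qed.

Lemma sin_approx1 a : sin_approx a 1 = a - a^3/6.
Proof.
  unfold sin_approx, sin_term. cbn [sum_f_R0]. simpl Nat.mul. simpl Nat.add.
  repeat rewrite INR_fact_S. simpl INR. field.
Qed.

Lemma PI_gt : 314/100 < PI.
Proof.
  assert (H : 157/100 < PI/2).
  { apply PI2_lower_bound; [lra|].
    destruct (pre_cos_bound (157/100) 2) as [H _]; [lra|lra|].
    simpl (2 * 2 + 1)%nat in H. rewrite cos_approx5 in H. lra. }
  lra.
Qed.

Lemma PI_lt : PI < 32/10.
Proof.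
  destruct (Rlt_or_le PI (32/10)) as [H|H]; [exact H|].
  exfalso.
  assert (H1 : 0 <= cos (16/10)) by (apply cos_ge_0; lra).
  destruct (pre_cos_bound (16/10) 1) as [_ H2]; [lra|lra|].
  simpl (2 * (1 + 1))%nat in H2. rewrite cos_approx4 in H2. lra.
Qed.

Lemma exp_le a b : a <= b -> exp a <= exp b.
Proof. intros [H|H]; [left; apply exp_increasing; exact H| subst; lra]. Qed.

Lemma rho_lb s : -(32/100) <= s -> 7/10 <= exp s.
Proof.
  intros H.
  assert (H1 : exp (-(32/100)) = exp (-(16/100)) * exp (-(16/100))).
  { rewrite <- exp_plus; f_equal; lra. }
  pose proof (exp_ineq1_le (-(16/100))).
  pose proof (exp_le _ _ H). nra.
Qed.
Definition U (i : nat) : R :=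
  match i with
  | 1%nat => (4939/5000)
  | 2%nat => (1189/1250)
  | 3%nat => (557/625)
  | 4%nat => (8093/10000)
  | 5%nat => (3537/5000)
  | 6%nat => (2941/5000)
  | 7%nat => (909/2000)
  | 8%nat => (3097/10000)
  | 9%nat => (393/2500)
  | 10%nat => (1/1250)
  | 11%nat => (- 311/2000)
  | 12%nat => (- 3081/10000)
  | 13%nat => (- 453/1000)
  | 14%nat => (- 1467/2500)
  | 15%nat => (- 3531/5000)
  | 16%nat => (- 4041/5000)
  | 17%nat => (- 8903/10000)
  | 18%nat => (- 4753/5000)
  | 19%nat => (- 4937/5000)
  | _ => 0 end.
Definition c2 (j : nat) : R :=
  match j with
  | 1%nat => (1/1)
  | 2%nat => (3/125)
  | 3%nat => (19/200)
  | 4%nat => (41/200)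
  | 5%nat => (69/200)
  | 6%nat => (499/1000)
  | 7%nat => (333/500)
  | 8%nat => (853/1000)
  | 9%nat => (132/125)
  | 10%nat => (1269/1000)
  | 11%nat => (186/125)
  | 12%nat => (1707/1000)
  | 13%nat => (1921/1000)
  | 14%nat => (531/250)
  | 15%nat => (2311/1000)
  | 16%nat => (1239/500)
  | 17%nat => (2621/1000)
  | 18%nat => (342/125)
  | 19%nat => (141/50)
  | 20%nat => (359/125)
  | 21%nat => (359/125)
  | 22%nat => (141/50)
  | 23%nat => (342/125)
  | 24%nat => (2621/1000)
  | 25%nat => (1239/500)
  | 26%nat => (2311/1000)
  | 27%nat => (531/250)
  | 28%nat => (1921/1000)
  | 29%nat => (1707/1000)
  | 30%nat => (186/125)
  | 31%nat => (1269/1000)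
  | 32%nat => (132/125)
  | _ => 1 end.

Lemma cos_le_mono x y : 0 <= x -> x <= y -> y <= PI -> cos y <= cos x.
Proof.
  intros H1 H2 H3. destruct H2 as [H2|H2].
  - left; apply cos_decreasing_1; lra.
  - subst; lra.
Qed.

Lemma cos_chain (i : nat) : (i <= 19)%nat ->
  cos (INR i * PI / 20) <= 2 * (cos_approx (INR i * (314/100) / 40) 4) ^ 2 - 1.
Proof.
  intros Hi.
  assert (Hi' : INR i <= 19) by (replace 19 with (INR 19) by (simpl; lra); apply le_INR; exact Hi).
  pose proof (pos_INR i) as Hi0. pose proof PI_gt. pose proof PI_lt.
  set (r := INR i * (314/100) / 40).
  assert (Hc : cos (INR i * PI / 20) <= cos (2 * r)).
  { apply cos_le_mono; unfold r; nra. }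
  rewrite cos_2a_cos in Hc.
  assert (Hr0 : 0 <= cos r) by (apply cos_ge_0; unfold r; nra).
  destruct (pre_cos_bound r 1) as [_ Hu]; [unfold r; nra|unfold r; nra|].
  simpl (2 * (1 + 1))%nat in Hu.
  nra.
Qed.

Ltac numU := rewrite cos_approx4; simpl INR; lra.

Lemma cosU (i : nat) : (1 <= i <= 19)%nat -> cos (INR i * PI / 20) <= U i.
Proof.
  intros Hi. eapply Rle_trans; [apply cos_chain; lia|].
  do 20 (destruct i as [|i]; [first [lia | simpl U; numU]|]). lia.
Qed.

Lemma INR_le_19 (i : nat) : (i <= 19)%nat -> INR i <= 19.
Proof. intros; replace 19 with (INR 19) by (simpl; lra); apply le_INR; auto. Qed.

Lemma gfun_cos a v u : cos v <= u -> u <= 7/10 -> 7/10 <= exp a ->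
  149/100 - 14/10 * u <= gfun a v.
Proof.
  intros H1 H2 H3. unfold gfun.
  assert (Hp1 : 0 <= (exp a - 7/10) * (exp a + 7/10 - 2 * u)) by (apply Rmult_le_pos; lra).
  assert (Hp2 : 0 <= exp a * (u - cos v)) by (apply Rmult_le_pos; lra).
  nra.
Qed.

Lemma lemA (i : nat) a v : (1 <= i <= 5)%nat ->
  INR i * PI / 20 <= v <= (INR i + 1) * PI / 20 -> 1 - U i * U i <= gfun a v.
Proof.
  intros Hi Hv.
  assert (Hi' : INR i <= 5) by (replace 5 with (INR 5) by (simpl; lra); apply le_INR; lia).
  pose proof (pos_INR i). pose proof PI_gt. pose proof PI_lt.
  assert (Hc1 : cos v <= cos (INR i * PI / 20)) by (apply cos_le_mono; nra).
  pose proof (cosU i ltac:(lia)) as Hc2.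
  assert (Hc0 : 0 <= cos v) by (apply cos_ge_0; nra).
  rewrite gfun_alt. pose proof (sc v).
  pose proof (Rle_0_sqr (exp a - cos v)). unfold Rsqr in *.
  assert (0 <= (U i - cos v) * (U i + cos v)) by (apply Rmult_le_pos; lra).
  nra.
Qed.

Lemma lemB (i : nat) a v : (1 <= i <= 19)%nat -> U i <= 7/10 -> 7/10 <= exp a ->
  INR i * PI / 20 <= v <= (INR i + 1) * PI / 20 -> 149/100 - 14/10 * U i <= gfun a v.
Proof.
  intros Hi HU Ha Hv.
  pose proof (INR_le_19 i ltac:(lia)).
  pose proof (pos_INR i). pose proof PI_gt. pose proof PI_lt.
  apply gfun_cos; auto.
  eapply Rle_trans; [|apply (cosU i); lia].
  apply cos_le_mono; nra.
Qed.

Lemma cos_2PI_minus v : cos (2 * PI - v) = cos v.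
Proof. rewrite cos_minus, cos_2PI, sin_2PI. ring. Qed.

Lemma lemC (i : nat) a v : (1 <= i <= 19)%nat -> U i <= 7/10 -> 7/10 <= exp a ->
  INR i * PI / 20 <= 2 * PI - v <= (INR i + 1) * PI / 20 -> 149/100 - 14/10 * U i <= gfun a v.
Proof.
  intros Hi HU Ha Hv.
  pose proof (INR_le_19 i ltac:(lia)).
  pose proof (pos_INR i). pose proof PI_gt. pose proof PI_lt.
  apply gfun_cos; auto.
  eapply Rle_trans; [|apply (cosU i); lia].
  rewrite <- cos_2PI_minus.
  apply cos_le_mono; nra.
Qed.

Lemma factor_j (j : nat) a v : (1 <= j <= 31)%nat -> 7/10 <= exp a ->
  INR j * PI / 20 <= v <= INR (S j) * PI / 20 -> c2 (S j) <= gfun a v.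
Proof.
  intros Hj Ha Hv. rewrite S_INR in Hv. pose proof PI_gt.
  destruct j as [|j]; [lia|].
  destruct j as [|j]; [ eapply Rle_trans; [|apply (lemA 1); [lia| simpl INR in *; lra]]; simpl; lra |].
  destruct j as [|j]; [ eapply Rle_trans; [|apply (lemA 2); [lia| simpl INR in *; lra]]; simpl; lra |].
  destruct j as [|j]; [ eapply Rle_trans; [|apply (lemA 3); [lia| simpl INR in *; lra]]; simpl; lra |].
  destruct j as [|j]; [ eapply Rle_trans; [|apply (lemA 4); [lia| simpl INR in *; lra]]; simpl; lra |].
  destruct j as [|j]; [ eapply Rle_trans; [|apply (lemA 5); [lia| simpl INR in *; lra]]; simpl; lra |].
  destruct j as [|j]; [ eapply Rle_trans; [|apply (lemB 6); [lia|simpl; lra|exact Ha|simpl INR in *; lra]]; simpl; lra |].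
  destruct j as [|j]; [ eapply Rle_trans; [|apply (lemB 7); [lia|simpl; lra|exact Ha|simpl INR in *; lra]]; simpl; lra |].
  destruct j as [|j]; [ eapply Rle_trans; [|apply (lemB 8); [lia|simpl; lra|exact Ha|simpl INR in *; lra]]; simpl; lra |].
  destruct j as [|j]; [ eapply Rle_trans; [|apply (lemB 9); [lia|simpl; lra|exact Ha|simpl INR in *; lra]]; simpl; lra |].
  destruct j as [|j]; [ eapply Rle_trans; [|apply (lemB 10); [lia|simpl; lra|exact Ha|simpl INR in *; lra]]; simpl; lra |].
  destruct j as [|j]; [ eapply Rle_trans; [|apply (lemB 11); [lia|simpl; lra|exact Ha|simpl INR in *; lra]]; simpl; lra |].
  destruct j as [|j]; [ eapply Rle_trans; [|apply (lemB 12); [lia|simpl; lra|exact Ha|simpl INR in *; lra]]; simpl; lra |].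
  destruct j as [|j]; [ eapply Rle_trans; [|apply (lemB 13); [lia|simpl; lra|exact Ha|simpl INR in *; lra]]; simpl; lra |].
  destruct j as [|j]; [ eapply Rle_trans; [|apply (lemB 14); [lia|simpl; lra|exact Ha|simpl INR in *; lra]]; simpl; lra |].
  destruct j as [|j]; [ eapply Rle_trans; [|apply (lemB 15); [lia|simpl; lra|exact Ha|simpl INR in *; lra]]; simpl; lra |].
  destruct j as [|j]; [ eapply Rle_trans; [|apply (lemB 16); [lia|simpl; lra|exact Ha|simpl INR in *; lra]]; simpl; lra |].
  destruct j as [|j]; [ eapply Rle_trans; [|apply (lemB 17); [lia|simpl; lra|exact Ha|simpl INR in *; lra]]; simpl; lra |].
  destruct j as [|j]; [ eapply Rle_trans; [|apply (lemB 18); [lia|simpl; lra|exact Ha|simpl INR in *; lra]]; simpl; lra |].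
  destruct j as [|j]; [ eapply Rle_trans; [|apply (lemB 19); [lia|simpl; lra|exact Ha|simpl INR in *; lra]]; simpl; lra |].
  destruct j as [|j]; [ eapply Rle_trans; [|apply (lemC 19); [lia|simpl; lra|exact Ha|simpl INR in *; lra]]; simpl; lra |].
  destruct j as [|j]; [ eapply Rle_trans; [|apply (lemC 18); [lia|simpl; lra|exact Ha|simpl INR in *; lra]]; simpl; lra |].
  destruct j as [|j]; [ eapply Rle_trans; [|apply (lemC 17); [lia|simpl; lra|exact Ha|simpl INR in *; lra]]; simpl; lra |].
  destruct j as [|j]; [ eapply Rle_trans; [|apply (lemC 16); [lia|simpl; lra|exact Ha|simpl INR in *; lra]]; simpl; lra |].
  destruct j as [|j]; [ eapply Rle_trans; [|apply (lemC 15); [lia|simpl; lra|exact Ha|simpl INR in *; lra]]; simpl; lra |].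
  destruct j as [|j]; [ eapply Rle_trans; [|apply (lemC 14); [lia|simpl; lra|exact Ha|simpl INR in *; lra]]; simpl; lra |].
  destruct j as [|j]; [ eapply Rle_trans; [|apply (lemC 13); [lia|simpl; lra|exact Ha|simpl INR in *; lra]]; simpl; lra |].
  destruct j as [|j]; [ eapply Rle_trans; [|apply (lemC 12); [lia|simpl; lra|exact Ha|simpl INR in *; lra]]; simpl; lra |].
  destruct j as [|j]; [ eapply Rle_trans; [|apply (lemC 11); [lia|simpl; lra|exact Ha|simpl INR in *; lra]]; simpl; lra |].
  destruct j as [|j]; [ eapply Rle_trans; [|apply (lemC 10); [lia|simpl; lra|exact Ha|simpl INR in *; lra]]; simpl; lra |].
  destruct j as [|j]; [ eapply Rle_trans; [|apply (lemC 9); [lia|simpl; lra|exact Ha|simpl INR in *; lra]]; simpl; lra |].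
  destruct j as [|j]; [ eapply Rle_trans; [|apply (lemC 8); [lia|simpl; lra|exact Ha|simpl INR in *; lra]]; simpl; lra |].
  lia.
Qed.

Lemma prodR_nonneg f n : (forall k, 0 <= f k) -> 0 <= prodR f n.
Proof. intros H; induction n; simpl; [lra|]. apply Rmult_le_pos; auto. Qed.

Lemma prodR_pos f n : (forall k, 0 < f k) -> 0 < prodR f n.
Proof. intros H; induction n; simpl; [lra|]. apply Rmult_lt_0_compat; auto. Qed.

Lemma prodR_mono f g n : (forall k, (1 <= k <= n)%nat -> 0 <= f k <= g k) ->
  prodR f n <= prodR g n.
Proof.
  induction n; intros H; simpl; [lra|].
  assert (Hf : 0 <= prodR f n).
  { clear IHn. induction n; simpl; [lra|]. apply Rmult_le_pos.
    - apply IHn; intros k Hk; apply H; lia.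
    - apply H; lia. }
  apply Rmult_le_compat; auto.
  - apply H; lia.
  - apply IHn; intros k Hk; apply H; lia.
  - apply H; lia.
Qed.

Lemma prodR_split f a n :
  prodR f (a + n) = prodR f a * prodR (fun i => f (a + i)%nat) n.
Proof.
  induction n; simpl.
  - rewrite Nat.add_0_r; ring.
  - rewrite Nat.add_succ_r; simpl; rewrite IHn; ring.
Qed.

Lemma prodR_ge_pow f c n : 0 <= c -> (forall k, (1 <= k <= n)%nat -> c <= f k) ->
  c ^ n <= prodR f n.
Proof.
  intros Hc; induction n; intros H; simpl; [lra|].
  rewrite Rmult_comm.
  apply Rmult_le_compat; auto.
  - apply pow_le; auto.
  - apply IHn; intros k Hk; apply H; lia.
  - apply H; lia.
Qed.

Lemma exp_pow a n : exp a ^ n = exp (INR n * a).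
Proof.
  induction n; simpl.
  - rewrite Rmult_0_l, exp_0; reflexivity.
  - rewrite IHn. rewrite <- exp_plus. f_equal. destruct n; simpl; ring.
Qed.

Lemma aux_pow n : (INR n + 1) ^ n <= 3 * INR n ^ n.
Proof.
  destruct n as [|m]; [simpl; lra|].
  set (r := INR (S m)).
  assert (Hr : 0 < r) by (unfold r; apply lt_0_INR; lia).
  replace (r + 1) with (r * (1 + / r)) by (field; lra).
  rewrite Rpow_mult_distr.
  assert (H1 : (1 + / r) ^ S m <= exp (/ r) ^ S m).
  { apply pow_incr; split; [pose proof (Rinv_0_lt_compat r Hr); lra| apply exp_ineq1_le]. }
  rewrite exp_pow in H1. fold r in H1.
  replace (r * / r) with 1 in H1 by (field; lra).
  pose proof exp_le_3.
  pose proof (pow_le r (S m) (Rlt_le _ _ Hr)).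
  nra.
Qed.

Lemma fact_lb n : INR n ^ n <= 3 ^ n * INR (Factorial.fact n).
Proof.
  induction n.
  - simpl; lra.
  - rewrite INR_fact_S, S_INR. simpl pow.
    pose proof (aux_pow n). pose proof (pos_INR n).
    pose proof (pow_le (INR n + 1) n ltac:(lra)).
    assert (0 <= INR n + 1) by lra.
    assert ((INR n + 1) ^ n <= 3 * (3 ^ n * INR (Factorial.fact n))) by lra.
    nra.
Qed.

Lemma prod_sq N n : INR N <> 0 ->
  prodR (fun i => (5 * INR i / INR N) ^ 2) n = ((5 / INR N) ^ n * INR (Factorial.fact n)) ^ 2.
Proof.
  intros HN; induction n.
  - simpl; ring.
  - cbn [prodR]. rewrite IHn, INR_fact_S, S_INR. simpl pow. field; exact HN.
Qed.

Definition Gk (N : nat) (x : R) (k : nat) : R :=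
  gfun (INR k * (x / INR N)) (INR k * (8 * PI / 5 / INR N)).

Lemma Gk_nonneg N x k : 0 <= Gk N x k.
Proof. apply gfun_nonneg. Qed.

Lemma nat_le_R (a b : nat) : (a <= b)%nat -> INR a <= INR b.
Proof. apply le_INR. Qed.

Lemma angle_bounds j k N : (0 < N)%nat -> (j * N <= 32 * k)%nat -> (32 * k <= S j * N)%nat ->
  INR j * PI / 20 <= INR k * (8 * PI / 5 / INR N) <= INR (S j) * PI / 20.
Proof.
  intros HN H1 H2.
  apply nat_le_R in H1; apply nat_le_R in H2. rewrite !mult_INR in H1, H2.
  assert (Hn : 0 < INR N) by (apply lt_0_INR; lia).
  pose proof PI_gt.
  replace (INR k * (8 * PI / 5 / INR N)) with (PI / 20 * ((INR 32 * INR k) / INR N))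
    by (simpl; field; lra).
  assert (INR j <= INR 32 * INR k / INR N).
  { apply Rmult_le_reg_r with (INR N); [lra|]. unfold Rdiv; rewrite Rmult_assoc, Rinv_l; lra. }
  assert (INR 32 * INR k / INR N <= INR (S j)).
  { apply Rmult_le_reg_r with (INR N); [lra|]. unfold Rdiv; rewrite Rmult_assoc, Rinv_l; lra. }
  split; nra.
Qed.

Lemma rho_k k N x : (1 <= N)%nat -> (k <= N)%nat -> - PI / 10 <= x ->
  7/10 <= exp (INR k * (x / INR N)).
Proof.
  intros HN Hk Hx. apply rho_lb.
  assert (Hn : 0 < INR N) by (apply lt_0_INR; lia).
  pose proof (nat_le_R _ _ Hk). pose proof (pos_INR k). pose proof PI_lt.
  set (t := INR k / INR N).
  assert (Ht0 : 0 <= t) by (unfold t; apply Rmult_le_pos; [lra| left; apply Rinv_0_lt_compat; lra]).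
  assert (Ht1 : t <= 1).
  { unfold t. apply Rmult_le_reg_r with (INR N); [lra|]. unfold Rdiv; rewrite Rmult_assoc, Rinv_l; lra. }
  replace (INR k * (x / INR N)) with (t * x) by (unfold t; field; lra).
  assert (0 <= t * (x + PI / 10)) by (apply Rmult_le_pos; lra).
  nra.
Qed.

Lemma factor_first k N x : (1 <= k)%nat -> (32 * k <= N)%nat -> - PI / 10 <= x ->
  (5 * INR k / INR N) ^ 2 <= Gk N x k.
Proof.
  intros Hk HkN Hx.
  assert (HN : (1 <= N)%nat) by lia.
  assert (Hn : 0 < INR N) by (apply lt_0_INR; lia).
  apply nat_le_R in HkN; rewrite mult_INR in HkN.
  assert (Hk1 : 1 <= INR k) by (replace 1 with (INR 1) by reflexivity; apply le_INR; lia).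
  pose proof PI_gt. pose proof PI_lt.
  set (t := INR k / INR N).
  assert (Ht0 : 0 < t) by (unfold t; apply Rmult_lt_0_compat; [lra| apply Rinv_0_lt_compat; lra]).
  assert (Ht1 : t <= 1/32).
  { unfold t. apply Rmult_le_reg_r with (INR N); [lra|]. unfold Rdiv; rewrite Rmult_assoc, Rinv_l; simpl in HkN; lra. }
  unfold Gk.
  set (v := INR k * (8 * PI / 5 / INR N)).
  assert (Hv : v = 8 * PI / 5 * t) by (unfold v, t; field; lra).
  replace (5 * INR k / INR N) with (5 * t) by (unfold t; field; lra).
  assert (Hv0 : 0 <= v) by nra.
  assert (HvP : v <= PI) by nra.
  destruct (sin_bound v 0 Hv0 HvP) as [Hs _].
  simpl (2 * 0 + 1)%nat in Hs. rewrite sin_approx1 in Hs.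
  assert (Hp : v ^ 3 <= 135 / 1024 * t).
  { rewrite Hv. set (p := 8 * PI / 5).
    assert (Hp0 : 0 <= p <= 512/100) by (unfold p; lra).
    assert (p ^ 3 <= (512/100)^3) by (apply pow_incr; lra).
    assert (t ^ 2 <= 1/1024) by nra.
    replace ((p * t) ^ 3) with (p ^ 3 * t ^ 2 * t) by ring.
    assert (0 <= p ^ 3) by (apply pow_le; lra).
    assert (0 <= t ^ 2) by (apply pow_le; lra).
    assert (p ^ 3 * t ^ 2 <= 135 / 1024) by nra.
    nra. }
  assert (Hs2 : 5 * t <= sin v) by nra.
  rewrite gfun_alt.
  pose proof (Rle_0_sqr (exp (INR k * (x / INR N)) - cos v)). unfold Rsqr in *.
  assert (0 <= 5 * t) by lra.
  nra.
Qed.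

Lemma first_region N x : (1 <= N)%nat -> - PI / 10 <= x ->
  ((5 / 96) ^ (N / 32) / 3) ^ 2 <= prodR (Gk N x) (N / 32).
Proof.
  intros HN Hx.
  set (q := (N / 32)%nat).
  assert (Hq1 : (32 * q <= N)%nat) by (unfold q; apply Nat.Div0.mul_div_le).
  assert (Hq2 : (N < 32 * (q + 1))%nat).
  { unfold q. pose proof (Nat.div_mod N 32 ltac:(lia)). pose proof (Nat.mod_upper_bound N 32 ltac:(lia)). lia. }
  assert (Hn : 0 < INR N) by (apply lt_0_INR; lia).
  eapply Rle_trans; [|apply prodR_mono with (f := fun i => (5 * INR i / INR N) ^ 2)].
  2: { intros k Hk. split; [apply pow2_ge_0|]. apply factor_first; auto; lia. }
  rewrite prod_sq by lra.
  assert (Hq0 : 0 <= INR q) by apply pos_INR.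
  apply nat_le_R in Hq2. apply nat_le_R in Hq1. rewrite mult_INR in Hq1.
  rewrite mult_INR, plus_INR, S_INR in Hq2. simpl (INR 1) in Hq2. simpl (INR 32) in Hq1, Hq2.
  assert (H1 : 0 <= (5 / 96) ^ q / 3) by (apply Rmult_le_pos; [apply pow_le; lra| lra]).
  apply pow_incr. split; [exact H1|].
  set (A := 5 / (32 * (INR q + 1))).
  assert (HA0 : 0 <= A) by (unfold A; apply Rmult_le_pos; [lra| left; apply Rinv_0_lt_compat; lra]).
  assert (HA1 : A <= 5 / INR N).
  { unfold A. apply Rmult_le_compat_l; [lra|]. apply Rinv_le_contravar; lra. }
  assert (HAp : A ^ q <= (5 / INR N) ^ q) by (apply pow_incr; lra).
  assert (Hf : 0 <= INR (Factorial.fact q)) by apply pos_INR.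
  eapply Rle_trans; [|apply Rmult_le_compat_r; [exact Hf| exact HAp]].
  replace (5 / 96) with (A * ((INR q + 1) / 3)) by (unfold A; field; lra).
  rewrite Rpow_mult_distr.
  pose proof (fact_lb (S q)) as HF. rewrite INR_fact_S, S_INR in HF. simpl pow in HF.
  assert (HB : (INR q + 1) ^ q <= 3 * 3 ^ q * INR (Factorial.fact q)).
  { apply Rmult_le_reg_l with (INR q + 1); [lra|]. nra. }
  replace (((INR q + 1) / 3) ^ q) with ((INR q + 1) ^ q / 3 ^ q)
    by (unfold Rdiv; rewrite Rpow_mult_distr, pow_inv; reflexivity).
  assert (H3 : 0 < 3 ^ q) by (apply pow_lt; lra).
  assert (HAq : 0 <= A ^ q) by (apply pow_le; lra).
  assert (Hd : (INR q + 1) ^ q / 3 ^ q / 3 <= INR (Factorial.fact q)).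
  { apply Rmult_le_reg_r with (3 ^ q * 3); [nra|].
    replace ((INR q + 1) ^ q / 3 ^ q / 3 * (3 ^ q * 3)) with ((INR q + 1) ^ q) by (field; lra).
    lra. }
  replace (A ^ q * ((INR q + 1) ^ q / 3 ^ q) / 3) with (A ^ q * ((INR q + 1) ^ q / 3 ^ q / 3)) by (field; lra).
  apply Rmult_le_compat_l; auto.
Qed.

Definition Tj (j : nat) : R := (5/96) ^ 2 * prodR c2 j.
Definition Wj (j : nat) : R := 1/9 * prodR (fun i => Rmin 1 (c2 i)) j.

Lemma c2_pos j : 0 < c2 j.
Proof. do 33 (destruct j as [|j]; [simpl; lra|]). simpl; lra. Qed.

Lemma c2_lb j : (2 <= j <= 32)%nat -> 2/100 <= c2 j.
Proof. intros Hj. do 33 (destruct j as [|j]; [first [lia | simpl; lra]|]). lia. Qed.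

Lemma Tj_nonneg j : 0 <= Tj j.
Proof. unfold Tj. apply Rmult_le_pos; [nra|]. apply prodR_nonneg; intros; left; apply c2_pos. Qed.

Lemma Wj_pos j : 0 < Wj j.
Proof.
  unfold Wj. apply Rmult_lt_0_compat; [lra|]. apply prodR_pos; intros k.
  pose proof (c2_pos k). unfold Rmin; destruct (Rle_dec 1 (c2 k)); lra.
Qed.

Lemma pow_min c q n : 0 <= c -> (n = q \/ n = S q) -> c ^ q * Rmin 1 c <= c ^ n.
Proof.
  intros Hc [-> | ->].
  - pose proof (pow_le c q Hc). assert (Rmin 1 c <= 1) by apply Rmin_l.
    assert (0 <= Rmin 1 c) by (unfold Rmin; destruct (Rle_dec 1 c); lra). nra.
  - simpl. pose proof (pow_le c q Hc). assert (Rmin 1 c <= c) by apply Rmin_r.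
    assert (0 <= Rmin 1 c) by (unfold Rmin; destruct (Rle_dec 1 c); lra). nra.
Qed.

Lemma main_ind N x : (1 <= N)%nat -> - PI / 10 <= x ->
  forall j, (1 <= j <= 32)%nat -> Tj j ^ (N / 32) * Wj j <= prodR (Gk N x) (j * N / 32).
Proof.
  intros HN Hx j. induction j as [|j IH]; intros Hj; [lia|].
  destruct (Nat.eq_dec j 0) as [->|Hj0].
  - rewrite Nat.mul_1_l. unfold Tj, Wj. cbn [prodR]. simpl c2.
    replace (Rmin 1 (1/1)) with 1 by (symmetry; apply Rmin_left; lra).
    eapply Rle_trans; [|apply first_region; auto].
    replace ((5 / 96) ^ 2 * (1 * (1 / 1))) with ((5/96)^2) by field.
    rewrite <- pow_mult, Nat.mul_comm, pow_mult. right; field.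
  - specialize (IH ltac:(lia)).
    set (q := (N / 32)%nat) in *.
    set (a := (j * N / 32)%nat) in *.
    set (b := (S j * N / 32)%nat).
    assert (Hq := Nat.div_mod N 32 ltac:(lia)). assert (Hq' := Nat.mod_upper_bound N 32 ltac:(lia)).
    assert (Ha := Nat.div_mod (j * N) 32 ltac:(lia)). assert (Ha' := Nat.mod_upper_bound (j * N) 32 ltac:(lia)).
    assert (Hb := Nat.div_mod (S j * N) 32 ltac:(lia)). assert (Hb' := Nat.mod_upper_bound (S j * N) 32 ltac:(lia)).
    fold q a b in Hq, Ha, Hb.
    assert (HjN : (S j * N = N + j * N)%nat) by reflexivity.
    assert (HjNle : (j * N <= 31 * N)%nat) by (apply Nat.mul_le_mono_r; lia).
    set (A := (j * N)%nat) in *.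
    rewrite HjN in Hb, Hb'.
    assert (Hab : (a <= b)%nat) by lia.
    set (n := (b - a)%nat).
    assert (Hn : n = q \/ n = S q) by (unfold n; lia).
    replace b with (a + n)%nat by (unfold n; lia).
    rewrite prodR_split.
    set (c := c2 (S j)).
    assert (Hc : 0 <= c) by (left; apply c2_pos).
    assert (HP : c ^ n <= prodR (fun i => Gk N x (a + i)) n).
    { apply prodR_ge_pow; auto. intros i Hi.
      set (k := (a + i)%nat).
      assert (Hk1 : (A <= 32 * k)%nat) by (unfold k; lia).
      assert (Hk2 : (32 * k <= S j * N)%nat) by (unfold k, A in *; lia).
      assert (HkN : (k <= N)%nat) by (unfold A in *; lia).
      unfold Gk. apply factor_j; [lia| apply rho_k; auto|].
      apply angle_bounds; auto; lia. }
    unfold Tj, Wj. cbn [prodR]. fold c.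
    replace ((5/96)^2 * (prodR c2 j * c)) with (Tj j * c) by (unfold Tj; ring).
    replace (1 / 9 * (prodR (fun i => Rmin 1 (c2 i)) j * Rmin 1 c))
      with (Wj j * Rmin 1 c) by (unfold Wj, c; ring).
    rewrite Rpow_mult_distr.
    pose proof (Tj_nonneg j). pose proof (Wj_pos j).
    pose proof (pow_le (Tj j) q ltac:(lra)).
    pose proof (pow_min c q n Hc Hn).
    assert (HG : 0 <= prodR (fun i => Gk N x (a + i)) n) by (apply prodR_nonneg; intros; apply Gk_nonneg).
    assert (HGa : 0 <= prodR (Gk N x) a) by (apply prodR_nonneg; intros; apply Gk_nonneg).
    assert (Hre : Tj j ^ q * c ^ q * (Wj j * Rmin 1 c) = (Tj j ^ q * Wj j) * (c ^ q * Rmin 1 c)) by ring.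
    rewrite Hre.
    apply Rmult_le_compat.
    + apply Rmult_le_pos; lra.
    + apply Rmult_le_pos; [apply pow_le; lra| unfold Rmin; destruct (Rle_dec 1 c); lra].
    + exact IH.
    + lra.
Qed.

Lemma T32 : 1 <= Tj 32.
Proof. unfold Tj. cbn [prodR]. simpl c2. lra. Qed.

Lemma prod_lb N x : (1 <= N)%nat -> - PI / 10 <= x -> Wj 32 <= prodR (Gk N x) N.
Proof.
  intros HN Hx.
  pose proof (main_ind N x HN Hx 32 ltac:(lia)) as H.
  rewrite Nat.mul_comm, Nat.div_mul in H by lia.
  eapply Rle_trans; [|exact H].
  pose proof (pow_R1_Rle (Tj 32) (N / 32) T32). pose proof (Wj_pos 32). nra.
Qed.

Lemma G1_eq N x : Gk N x 1 = gfun (x / INR N) (8 * PI / 5 / INR N).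
Proof. unfold Gk. simpl INR. rewrite !Rmult_1_l. reflexivity. Qed.

Lemma search_j N : forall J, (32 <= J * N)%nat ->
  exists j, (j < J)%nat /\ (j * N <= 32)%nat /\ (32 <= S j * N)%nat.
Proof.
  induction J as [|J IH]; intros H; [simpl in H; lia|].
  destruct (le_lt_dec 32 (J * N)) as [H1|H1].
  - destruct (IH H1) as [j [Hj1 [Hj2 Hj3]]]. exists j; repeat split; lia.
  - exists J; repeat split; lia.
Qed.

Lemma D_lb N x : (1 <= N)%nat -> - PI / 10 <= x ->
  2/100 <= gfun (x / INR N) (8 * PI / 5 / INR N) * INR N ^ 2.
Proof.
  intros HN Hx. rewrite <- G1_eq.
  assert (Hn : 1 <= INR N) by (replace 1 with (INR 1) by reflexivity; apply le_INR; lia).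
  pose proof (Gk_nonneg N x 1).
  destruct (le_lt_dec 32 N) as [H32|H32].
  - pose proof (factor_first 1 N x ltac:(lia) ltac:(lia) Hx) as Hff.
    replace ((5 * INR 1 / INR N) ^ 2) with (25 / (INR N ^ 2)) in Hff by (simpl; field; lra).
    assert (0 < INR N ^ 2) by (apply pow_lt; lra).
    apply Rmult_le_compat_r with (r := INR N ^ 2) in Hff; [|lra].
    replace (25 / INR N ^ 2 * INR N ^ 2) with 25 in Hff by (field; lra). lra.
  - destruct (search_j N 32 ltac:(lia)) as [j [Hj1 [Hj2 Hj3]]].
    assert (Hj0 : (1 <= j)%nat) by (destruct j; simpl in Hj3; lia).
    assert (Hf : c2 (S j) <= Gk N x 1).
    { unfold Gk. apply factor_j; [lia| apply rho_k; auto; lia|].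
      apply angle_bounds; lia. }
    pose proof (c2_lb (S j) ltac:(lia)).
    assert (1 <= INR N ^ 2) by (simpl; nra).
    nra.
Qed.

Lemma exp_minus1_bound a M : a <= M -> 0 <= M ->
  (1 - exp a) * (1 - exp a) <= exp M * exp M * (a * a).
Proof.
  intros HaM HM.
  pose proof (exp_le _ _ HaM). pose proof (exp_pos a).
  assert (HM1 : 1 <= exp M) by (pose proof (exp_ineq1_le M); lra).
  destruct (Rle_or_lt 0 a) as [Ha|Ha].
  - pose proof (exp_ineq1_le (- a)).
    assert (Hm : exp a * exp (- a) = 1) by (rewrite <- exp_plus; replace (a + - a) with 0 by ring; apply exp_0).
    assert (K1 : exp a - 1 <= a * exp a) by nra.
    assert (K2 : 0 <= exp a - 1) by (pose proof (exp_ineq1_le a); lra).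
    assert (K3 : exp a - 1 <= a * exp M) by nra.
    nra.
  - pose proof (exp_ineq1_le a).
    assert (K2 : 0 <= 1 - exp a).
    { assert (exp a <= exp 0) by (apply exp_le; lra). rewrite exp_0 in *; lra. }
    assert (K3 : 1 - exp a <= - a * exp M) by nra.
    nra.
Qed.

Lemma one_minus_cos b : 0 <= b -> 1 - cos b <= b * b / 2.
Proof.
  intros Hb. destruct (Rle_or_lt b 2) as [H|H].
  - destruct (pre_cos_bound b 0) as [Hc _]; [lra|lra|].
    simpl (2 * 0 + 1)%nat in Hc. rewrite cos_approx1 in Hc. simpl in Hc. lra.
  - pose proof (COS_bound b). nra.
Qed.

Definition Mx : R := exp (2 * PI).
Definition Bc : R := Mx * Mx * (4 * PI * PI) + Mx * ((8 * PI / 5) * (8 * PI / 5)).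

Lemma D_ub N x : (1 <= N)%nat -> - PI / 10 <= x <= 2 * PI ->
  gfun (x / INR N) (8 * PI / 5 / INR N) * INR N ^ 2 <= Bc.
Proof.
  intros HN [Hx1 Hx2].
  assert (Hn : 1 <= INR N) by (replace 1 with (INR 1) by reflexivity; apply le_INR; lia).
  pose proof PI_gt.
  set (a := x / INR N). set (b := 8 * PI / 5 / INR N).
  assert (Hax : a * INR N = x) by (unfold a; field; lra).
  assert (Hbx : b * INR N = 8 * PI / 5) by (unfold b; field; lra).
  assert (Hb0 : 0 <= b) by (unfold b; apply Rmult_le_pos; [lra| left; apply Rinv_0_lt_compat; lra]).
  assert (HaM : a <= 2 * PI).
  { apply Rmult_le_reg_r with (INR N); [lra|]. rewrite Hax. nra. }
  assert (HG : gfun a b = (1 - exp a) * (1 - exp a) + 2 * exp a * (1 - cos b)) by (unfold gfun; ring).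
  rewrite HG.
  pose proof (exp_minus1_bound a (2 * PI) HaM ltac:(lra)) as H1. fold Mx in H1.
  pose proof (one_minus_cos b Hb0) as H2.
  assert (He : exp a <= Mx) by (apply exp_le; lra).
  pose proof (exp_pos a).
  assert (Hx2' : x * x <= 4 * PI * PI) by nra.
  unfold Bc.
  assert (E1 : (1 - exp a) * (1 - exp a) * INR N ^ 2 <= Mx * Mx * (4 * PI * PI)).
  { apply Rle_trans with (Mx * Mx * (a * a) * INR N ^ 2).
    - apply Rmult_le_compat_r; [apply pow2_ge_0| exact H1].
    - replace (Mx * Mx * (a * a) * INR N ^ 2) with (Mx * Mx * ((a * INR N) * (a * INR N))) by ring.
      rewrite Hax. apply Rmult_le_compat_l; [nra| exact Hx2']. }
  assert (E2 : 2 * exp a * (1 - cos b) * INR N ^ 2 <= Mx * ((8 * PI / 5) * (8 * PI / 5))).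
  { apply Rle_trans with (2 * exp a * (b * b / 2) * INR N ^ 2).
    - apply Rmult_le_compat_r; [apply pow2_ge_0|]. apply Rmult_le_compat_l; [lra| exact H2].
    - replace (2 * exp a * (b * b / 2) * INR N ^ 2) with (exp a * ((b * INR N) * (b * INR N))) by (simpl; field).
      rewrite Hbx. apply Rmult_le_compat_r; [nra| exact He]. }
  lra.
Qed.

Lemma norm_2PIi : Cnorm2 (Cmul (RtoC (2 * PI)) Ci) = 4 * PI * PI.
Proof. unfold Cnorm2, Cmul, RtoC, Ci; simpl; ring. Qed.

Lemma final_ineq Qn D4 Dz P PN Mq Pm ce :
  0 <= Qn -> Qn <= Mq -> 0 < D4 -> 0 < Dz -> 0 < P -> Pm <= P -> 0 < Pm -> 0 < ce ->
  ce <= Dz * PN ^ 2 -> 0 < PN ->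
  sqrt (Qn * / (D4 * Dz * P)) <= sqrt (Mq / (D4 * Pm * ce)) * PN.
Proof.
  intros HQ0 HQ HD4 HDz HP HPm HPm0 Hce Hc HPN.
  rewrite <- (sqrt_pow2 PN) by lra. rewrite <- sqrt_mult_alt.
  2: { apply Rmult_le_pos; [lra|]. left; apply Rinv_0_lt_compat. apply Rmult_lt_0_compat; [|lra]. nra. }
  apply sqrt_le_1_alt.
  assert (HDP : 0 < D4 * Dz * P) by (apply Rmult_lt_0_compat; [nra|lra]).
  assert (HDc : 0 < D4 * Pm * ce) by (apply Rmult_lt_0_compat; [nra|lra]).
  apply Rmult_le_reg_r with (D4 * Dz * P * (D4 * Pm * ce)); [nra|].
  replace (Qn * / (D4 * Dz * P) * (D4 * Dz * P * (D4 * Pm * ce))) with (Qn * (D4 * Pm * ce)) by (field; lra).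
  replace (Mq / (D4 * Pm * ce) * PN ^ 2 * (D4 * Dz * P * (D4 * Pm * ce))) with (Mq * (D4 * (Dz * PN ^ 2) * P)) by (field; lra).
  assert (Pm * ce <= (Dz * PN ^ 2) * P) by nra.
  assert (0 <= Qn * D4) by nra.
  assert (Qn * (D4 * Pm * ce) <= Qn * (D4 * (Dz * PN ^ 2) * P)) by nra.
  assert (0 <= D4 * (Dz * PN ^ 2) * P) by nra.
  nra.
Qed.

Theorem corollary3p3 : forall m : Z, exists K : R,
  forall (N : nat), (1 <= N)%nat ->
  forall x y : R, - PI / 10 <= x <= 2 * PI -> y = 8 * PI / 5 ->
  Cnorm (corF m N (x, y)) <= K * powerRZ (INR N) (m + 1).
Proof.
  intros m.
  set (Mq := Mx * Mx).
  set (Pm := Wj 32).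
  set (e := (m + 1)%Z).
  set (ce := match e with
             | Z0 => 1
             | Zpos p => (2/100) ^ Pos.to_nat p
             | Zneg p => / Bc ^ Pos.to_nat p end).
  exists (sqrt (Mq / (4 * PI * PI * Pm * ce))).
  intros N HN x y Hx Hy. subst y.
  assert (Hn : 1 <= INR N) by (replace 1 with (INR 1) by reflexivity; apply le_INR; lia).
  assert (HnZ : INR N <> 0) by lra.
  unfold Cnorm, corF. change (m + 1)%Z with e.
  rewrite Cdiv_real by exact HnZ.
  change (Cexp (x / INR N, 8 * PI / 5 / INR N)) with (E (x / INR N) (8 * PI / 5 / INR N)).
  set (a := x / INR N). set (b := 8 * PI / 5 / INR N).
  pose proof (D_lb N x HN (proj1 Hx)) as HDl. pose proof (D_ub N x HN Hx) as HDu.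
  fold a b in HDl, HDu.
  set (D := gfun a b) in *.
  assert (HD0 : 0 < D).
  { assert (0 < INR N ^ 2) by (apply pow_lt; lra). destruct (Rle_or_lt D 0); [|lra]. nra. }
  assert (HPi : 0 < PI) by apply PI_RGT_0.
  assert (HP : Pm <= Cnorm2 (qpoch (E a b) N)).
  { rewrite norm_qpoch. apply prod_lb; [exact HN| apply Hx]. }
  assert (HPm : 0 < Pm) by apply Wj_pos.
  assert (HPN : 0 < powerRZ (INR N) e) by (apply powerRZ_lt; lra).
  assert (HQ : Cnorm2 (E a b) <= Mq).
  { rewrite norm_E. unfold Mq, Mx.
    assert (exp a <= exp (2 * PI)).
    { apply exp_le. unfold a. apply Rmult_le_reg_r with (INR N); [lra|].
      unfold Rdiv; rewrite Rmult_assoc, Rinv_l by lra. destruct Hx; nra. }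
    pose proof (exp_pos a). nra. }
  assert (Hnorm1 : Cnorm2 (Csub (E a b) (RtoC 1)) = D) by apply norm_E_minus_1.
  assert (Hce : 0 < ce /\ ce <= Cnorm2 (CpowZ (Csub (E a b) (RtoC 1)) e) * powerRZ (INR N) e ^ 2
               /\ 0 < Cnorm2 (CpowZ (Csub (E a b) (RtoC 1)) e)).
  { unfold ce. destruct e as [|p|p]; simpl CpowZ; simpl powerRZ.
    - unfold Cnorm2, RtoC; simpl. repeat split; lra.
    - rewrite Cnorm2_pow, Hnorm1. set (k := Pos.to_nat p).
      repeat split.
      + apply pow_lt; lra.
      + rewrite <- pow_mult, Nat.mul_comm, pow_mult, <- Rpow_mult_distr.
        apply pow_incr; split; [lra|]. simpl in HDl |- *. lra.
      + apply pow_lt; lra.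
    - rewrite Cnorm2_inv, Cnorm2_pow, Hnorm1 by (rewrite Cnorm2_pow, Hnorm1; apply pow_nonzero; lra).
      set (k := Pos.to_nat p).
      assert (HBc : 0 < Bc) by lra.
      repeat split.
      + apply Rinv_0_lt_compat, pow_lt; lra.
      + replace (/ D ^ k * (/ INR N ^ k) ^ 2) with (/ (D * INR N ^ 2) ^ k).
        2: { rewrite Rpow_mult_distr, <- pow_mult, Nat.mul_comm, pow_mult.
             field. split; apply pow_nonzero; lra. }
        apply Rinv_le_contravar; [apply pow_lt; simpl in HDl |- *; lra|].
        apply pow_incr; split; [simpl in HDl |- *; lra| exact HDu].
      + apply Rinv_0_lt_compat, pow_lt; lra. }
  destruct Hce as [Hce0 [Hce1 HDz]].
  assert (HPp : 0 < Cnorm2 (qpoch (E a b) N)) by lra.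
  unfold Cdiv. rewrite Cnorm2_mul, Cnorm2_inv.
  2: { rewrite !Cnorm2_mul. replace (Cnorm2 (RtoC (2*PI)) * Cnorm2 Ci) with (4*PI*PI) by (unfold Cnorm2, RtoC, Ci; simpl; ring).
       apply Rgt_not_eq. apply Rmult_lt_0_compat; [apply Rmult_lt_0_compat; [nra|lra]|lra]. }
  rewrite !Cnorm2_mul. replace (Cnorm2 (RtoC (2*PI)) * Cnorm2 Ci) with (4*PI*PI) by (unfold Cnorm2, RtoC, Ci; simpl; ring).
  apply final_ineq; auto.
  - apply Cnorm2_nonneg.
  - nra.
Qed.
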